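(* Let $T$ be a monoid, $(X,\cdot)$ an order-preserving left action of $T$ on a semilattice $X$ with identity, and $Y$ a subsemilattice of $X$ with identity satisfying: (A) for all $t\in T$ and $e,f\in Y$ with $e\le f$, $t\cdot f\in Y$ implies $t\cdot e\in Y$; (B) for all $t\in T$ there exists $g\in Y$ with $t\cdot g\in Y$. Let $H^{\mathcal{Q}}=\{te:t\in T,e\in Y,t\cdot e\in Y\}$ and $\mathcal{Q}_\ell(T,X,Y)=\langle H^{\mathcal{Q}}\rangle_{(2)}\subseteq\mathcal{P}_\ell(T,X)$. Then $\mathcal{Q}_\ell(T,X,Y)$ is a subsemigroup of $\mathcal{P}_\ell(T,X)$ closed under $+$ and $*$, is a monoid with identity $1_Y$, is a $*$-left Ehresmann monoid with semilattice of projections $Y$, and $H^{\mathcal{Q}}$ is a proper basis of $\mathcal{Q}_\ell(T,X,Y)$.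
   Context: A semilattice is a commutative semigroup of idempotents, ordered by $e\le f$ iff $ef=e$; $\langle A\rangle_{(2)}$ is the subsemigroup generated by $A$. $\mathcal{P}_\ell(T,X)$: let $T*X$ be the semigroup free product acting on $X$ (elements of $X$ act by multiplication), $\omega^+=\omega\cdot1_X$, $\sim$ the semigroup congruence generated by $\{(\alpha^+\alpha,\alpha)\}\cup\{(1_T,1_X)\}$, and $\mathcal{P}_\ell(T,X)=(T*X)/\sim$ with $[\alpha]^+=[\alpha^+]$; $X$ and $T$ are identified with their injective images $\{[x]\}$, $\{[t]\}$. It is a left Ehresmann monoid with projections $X$ and unique $T$-normal forms $t_0e_1t_1\cdots e_nt_n$ ($n\ge0$, $e_i\in X\setminus\{1\}$, $t_1,\dots,t_{n-1}\in T\setminus\{1\}$, $e_i<(t_ie_{i+1}\cdots e_nt_n)^+$); its operation $*$ is $a^*=e_n$ if $n\ge1$ and $t_n=1$, $a^*=1$ otherwise. A $*$-left Ehresmann monoid is a monoid with unary operations $+,*$ satisfying $x^+x=x$, $(x^+y^+)^+=x^+y^+$, $x^+y^+=y^+x^+$, $(xy)^+=(xy^+)^+$, $xx^*=x$, $(x^* )^*=x^*$, $x^*y^*=y^*x^*$, $(xy^* )^*y^*=(xy^* )^*$, $(x^* )^+=x^*$, $(x^+)^*=x^+$; $E=\{a^+\}=\{a^*\}$; $\sigma$ is the least monoid congruence containing $E\times E$. $H\subseteq M$ is atomic if: (H1) $E\subseteq H$; (H2) $h\in H,e\in E$ imply $he\in H$ and $(he)^*=h^*e$; (H3) if $h\in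 H$, $k\in H\setminus E$, $h^*\ge k^+$ then $hk\in H$ and $(hk)^*=k^*$; (H4) every $m$ is $\sigma$-related to some $h\in H$; (H5) if $h,k,w\in H$, $hk\,\sigma\,w$, $k^*=w^*$, then some $u\in H$ has $u\,\sigma\,h$, $u^*\ge k^+$. $H$ is proper if ($h^*=k^*$ and $h\,\sigma\,k$) iff $h=k$. $h_1\cdots h_n$ is in $H$-canonical form if $h_i^*<h_{i+1}^+$ ($1\le i<n$) and $h_i\notin E$ ($2\le i\le n$); $M$ has $H$-canonical forms if each element has exactly one such expression. A basis is an atomic generating set $H$ for which $M$ has $H$-canonical forms; a proper basis is a basis which is proper. *)

(* Defs.v *)
From Stdlib Require Import List ClassicalEpsilon.
Import ListNotations.
Set Implicit Arguments.

Record data := Data {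
  T : Type; X : Type;
  mulT : T -> T -> T; oneT : T;
  meet : X -> X -> X; oneX : X;
  act : T -> X -> X }.

Section Pl.
Variable D : data.

(* letters of the (semigroup) free product T*X *)
Definition letter := (T D + X D)%type.
Definition word := list letter.

Definition act_word (w : word) (x : X D) : X D :=
  fold_right (fun l acc => match l with
                           | inl t => act D t acc
                           | inr e => meet D e acc end) x w.

Definition plusw (w : word) : X D := act_word w (oneX D).

(* The congruence on words: free-product relations (making the quotient of
   words the free product T*X, with the empty word identified with 1_X),
   together with (alpha^+ alpha, alpha) and (1_T, 1_X). *)
Inductive cong : word -> word -> Prop :=
| cong_T s t : cong [inl s; inl t] [inl (mulT D s t)]
| cong_X e f : cong [inr e; inr f] [inr (meet D e f)]
| cong_plus a : cong (inr (plusw a) :: a) a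
| cong_one : cong [inl (oneT D)] [inr (oneX D)]
| cong_refl u : cong u u
| cong_sym u v : cong u v -> cong v u
| cong_trans u v w : cong u v -> cong v w -> cong u w
| cong_ctx p q u v : cong u v -> cong (p ++ u ++ q) (p ++ v ++ q).

(* Elements of P_l(T,X) are represented by their congruence classes,
   i.e. predicates on words of the form [cls w]. *)
Definition Pl := word -> Prop.
Definition cls (w : word) : Pl := fun w' => cong w w'.
Definition isClass (a : Pl) : Prop := exists w, a = cls w.

Definition mulP (a b : Pl) : Pl :=
  fun w => exists u v, a u /\ b v /\ cong w (u ++ v).
Definition plusP (a : Pl) : Pl :=
  fun w => exists u, a u /\ cong w [inr (plusw u)].

Definition injT (t : T D) : Pl := cls [inl t].
Definition injX (e : X D) : Pl := cls [inr e].

Definition leX (e f : X D) := meet D e f = e.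
Definition ltX (e f : X D) := leX e f /\ e <> f.

(* T-normal forms t0 e1 t1 ... en tn, the tail being [(e1,t1);...;(en,tn)] *)
Fixpoint nf_word (l : list (X D * T D)) : word :=
  match l with
  | [] => []
  | (e, t) :: r => inr e :: inl t :: nf_word r
  end.

Fixpoint is_nf_tail (l : list (X D * T D)) : Prop :=
  match l with
  | [] => True
  | (e, t) :: r =>
      e <> oneX D /\ (r <> [] -> t <> oneT D) /\
      ltX e (plusw (inl t :: nf_word r)) /\ is_nf_tail r
  end.

Definition star_spec (a : Pl) (e : X D) : Prop :=
  exists t0 l, is_nf_tail l /\ a = cls (inl t0 :: nf_word l) /\
    ((exists l' e', l = l' ++ [(e', oneT D)] /\ e = e') \/
     ((forall l' e', l <> l' ++ [(e', oneT D)]) /\ e = oneX D)).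

(* a^* (well defined by uniqueness of T-normal forms) *)
Definition starP (a : Pl) : Pl :=
  injX (epsilon (inhabits (oneX D)) (star_spec a)).

End Pl.

Section Gen.
Variables (M : Type) (S : M -> Prop) (mul : M -> M -> M) (one : M)
          (plus star : M -> M).

Definition closed_ops : Prop :=
  (forall a b, S a -> S b -> S (mul a b)) /\
  (forall a, S a -> S (plus a)) /\ (forall a, S a -> S (star a)).

Definition is_monoid_with_id : Prop :=
  S one /\ (forall a, S a -> mul one a = a /\ mul a one = a) /\
  (forall a b c, S a -> S b -> S c -> mul (mul a b) c = mul a (mul b c)).

Definition star_left_ehresmann_axioms : Prop :=
  forall x y, S x -> S y ->
    mul (plus x) x = x /\
    plus (mul (plus x) (plus y)) = mul (plus x) (plus y) /\
    mul (plus x) (plus y) = mul (plus y) (plus x) /\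
    plus (mul x y) = plus (mul x (plus y)) /\
    mul x (star x) = x /\
    star (star x) = star x /\
    mul (star x) (star y) = mul (star y) (star x) /\
    mul (star (mul x (star y))) (star y) = star (mul x (star y)) /\
    plus (star x) = star x /\
    star (plus x) = plus x.

Definition Eproj (e : M) : Prop := exists a, S a /\ e = plus a.

Definition E_plus_eq_star : Prop :=
  forall e, (exists a, S a /\ e = plus a) <-> (exists a, S a /\ e = star a).

Definition le (e f : M) := mul e f = e.
Definition lt (e f : M) := le e f /\ e <> f.

Inductive sigma : M -> M -> Prop :=
| sigma_base e f : Eproj e -> Eproj f -> sigma e f
| sigma_refl a : S a -> sigma a a
| sigma_sym a b : sigma a b -> sigma b a
| sigma_trans a b c : sigma a b -> sigma b c -> sigma a c
| sigma_l c a b : S c -> sigma a b -> sigma (mul c a) (mul c b)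
| sigma_r c a b : S c -> sigma a b -> sigma (mul a c) (mul b c).

Definition atomic (H : M -> Prop) : Prop :=
  (forall h, H h -> S h) /\
  (forall e, Eproj e -> H e) /\
  (forall h e, H h -> Eproj e ->
              H (mul h e) /\ star (mul h e) = mul (star h) e) /\
  (forall h k, H h -> H k -> ~ Eproj k -> le (plus k) (star h) ->
              H (mul h k) /\ star (mul h k) = star k) /\
  (forall m, S m -> exists h, H h /\ sigma m h) /\
  (forall h k w, H h -> H k -> H w -> sigma (mul h k) w ->
              star k = star w ->
              exists u, H u /\ sigma u h /\ le (plus k) (star u)).

Fixpoint prodl (l : list M) : M :=
  match l with
  | [] => one
  | [h] => h
  | h :: r => mul h (prodl r)
  end.

Fixpoint canon_chain (l : list M) : Prop :=
  match l with
  | h :: ((k :: _) as r) => lt (star h) (plus k) /\ ~ Eproj k /\ canon_chain r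
  | _ => True
  end.

Definition canonical (H : M -> Prop) (l : list M) : Prop :=
  l <> [] /\ Forall H l /\ canon_chain l.

Definition has_canonical_forms (H : M -> Prop) : Prop :=
  forall a, S a ->
    (exists l, canonical H l /\ prodl l = a) /\
    (forall l l', canonical H l -> canonical H l' ->
        prodl l = a -> prodl l' = a -> l = l').

Definition generates (H : M -> Prop) : Prop :=
  forall a, S a -> exists l, l <> [] /\ Forall H l /\ prodl l = a.

Definition basis (H : M -> Prop) : Prop :=
  atomic H /\ generates H /\ has_canonical_forms H.

Definition proper (H : M -> Prop) : Prop :=
  forall h k, H h -> H k -> ((star h = star k /\ sigma h k) <-> h = k).

Definition proper_basis (H : M -> Prop) : Prop := basis H /\ proper H.

End Gen.

Definition HQ (D : data) (Y : X D -> Prop) (a : Pl D) : Prop :=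
  exists t e, Y e /\ Y (act D t e) /\ a = mulP (injT t) (injX e).

Inductive Ql (D : data) (Y : X D -> Prop) : Pl D -> Prop :=
| Ql_gen a : HQ Y a -> Ql Y a
| Ql_mul a b : Ql Y a -> Ql Y b -> Ql Y (mulP a b).

(* Main.v *)
Require Import Defs.
From Stdlib Require Import List ClassicalEpsilon FunctionalExtensionality PropExtensionality.
Import ListNotations.

Section Base.
Variable D : data.
Hypothesis HTassoc : forall r s t, mulT D (mulT D r s) t = mulT D r (mulT D s t).
Hypothesis HT1l : forall t, mulT D (oneT D) t = t.
Hypothesis HT1r : forall t, mulT D t (oneT D) = t.
Hypothesis HXassoc : forall e f g, meet D (meet D e f) g = meet D e (meet D f g).
Hypothesis HXcomm : forall e f, meet D e f = meet D f e.
Hypothesis HXidem : forall e, meet D e e = e.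
Hypothesis HX1 : forall e, meet D (oneX D) e = e.
Hypothesis Hact1 : forall e, act D (oneT D) e = e.
Hypothesis Hactmul : forall s t e, act D (mulT D s t) e = act D s (act D t e).
Hypothesis Hactmono : forall t e f, leX D e f -> leX D (act D t e) (act D t f).

Notation mT := (mulT D). Notation o1 := (oneT D). Notation mX := (meet D).
Notation x1 := (oneX D). Notation ac := (act D).

Lemma mX1r e : mX e x1 = e.
Proof. rewrite HXcomm; apply HX1. Qed.

Lemma le_refl e : leX D e e. Proof. apply HXidem. Qed.
Lemma le_1 e : leX D e x1. Proof. apply mX1r. Qed.
Lemma le_meet_l e f : leX D (mX e f) e.
Proof. unfold leX. rewrite HXassoc, (HXcomm f e), <- HXassoc, HXidem; auto. Qed.
Lemma le_meet_r e f : leX D (mX e f) f.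
Proof. unfold leX. rewrite HXassoc, HXidem; auto. Qed.
Lemma le_trans e f g : leX D e f -> leX D f g -> leX D e g.
Proof. unfold leX; intros H1 H2. rewrite <- H1, HXassoc, H2; auto. Qed.
Lemma le_antisym e f : leX D e f -> leX D f e -> e = f.
Proof. unfold leX; intros H1 H2. rewrite <- H1, HXcomm; auto. Qed.
Lemma le_meet_mono e x y : leX D x y -> leX D (mX e x) (mX e y).
Proof. unfold leX; intros H. rewrite HXassoc, <- (HXassoc x e y), (HXcomm x e), HXassoc,
  <- (HXassoc e e), HXidem, H; auto. Qed.
Lemma le_glb e f g : leX D e f -> leX D e g -> leX D e (mX f g).
Proof. unfold leX; intros H1 H2. rewrite <- HXassoc, H1; auto. Qed.
Lemma le_meet_eq e f : leX D e f -> mX f e = e.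
Proof. unfold leX; intros H; rewrite HXcomm; auto. Qed.
Lemma le_1_eq e : leX D x1 e -> e = x1.
Proof. unfold leX; intros H. rewrite HX1 in H; auto. Qed.

Lemma act_word_app (u v : word D) x : act_word (u ++ v) x = act_word u (act_word v x).
Proof. unfold act_word. rewrite fold_right_app; auto. Qed.

Lemma act_word_mono (w : word D) x y : leX D x y -> leX D (act_word w x) (act_word w y).
Proof. induction w as [|l w IH]; simpl; intros H; auto.
  destruct l; [apply Hactmono|apply le_meet_mono]; auto. Qed.

Lemma act_word_cong (u v : word D) : cong u v -> forall x, act_word u x = act_word v x.
Proof. induction 1; intros x; simpl; auto.
  - unfold plusw. apply le_meet_eq. apply act_word_mono, le_1.
  - rewrite Hact1, HX1; auto.
  - rewrite IHcong1; auto.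
  - rewrite !act_word_app, IHcong; auto.
Qed.

Lemma plusw_cong (u v : word D) : cong u v -> plusw u = plusw v.
Proof. intros H; apply act_word_cong; auto. Qed.

Lemma cg_l (p u v : word D) : cong u v -> cong (p ++ u) (p ++ v).
Proof. intros H. pose proof (cong_ctx p [] H) as H'. rewrite !app_nil_r in H'; auto. Qed.
Lemma cg_r (q u v : word D) : cong u v -> cong (u ++ q) (v ++ q).
Proof. intros H. pose proof (cong_ctx [] q H) as H'. simpl in H'; auto. Qed.
Lemma cg_cons a (u v : word D) : cong u v -> cong (a :: u) (a :: v).
Proof. intros H; apply (cg_l [a] _ _ H). Qed.

Lemma cg_T1 (w : word D) : cong (inl o1 :: w) w.
Proof. apply (cong_trans (v := inr x1 :: w)).
  - apply (cg_r w _ _ (cong_one D)).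
  - apply (cg_r w _ _ (cong_plus (D:=D) [])). Qed.
Lemma cg_X1 (w : word D) : cong (inr x1 :: w) w.
Proof. apply (cg_r w _ _ (cong_plus (D:=D) [])). Qed.
Lemma cg_XX e f (w : word D) : cong (inr e :: inr f :: w) (inr (mX e f) :: w).
Proof. apply (cg_r w _ _ (cong_X D e f)). Qed.
Lemma cg_TT s t (w : word D) : cong (inl s :: inl t :: w) (inl (mT s t) :: w).
Proof. apply (cg_r w _ _ (cong_T D s t)). Qed.
Lemma cg_plus (a w : word D) : cong (inr (plusw a) :: a ++ w) (a ++ w).
Proof. apply (cg_r w _ _ (cong_plus a)). Qed.
Lemma cg_absorb e (w : word D) : leX D (plusw w) e -> cong (inr e :: w) w.
Proof. intros H. eapply cong_trans.
  apply cg_cons. apply cong_sym. apply (cong_plus w).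
  eapply cong_trans. apply cg_XX.
  rewrite HXcomm, H. apply cong_plus. Qed.

Lemma cg_app (u u' v v' : word D) : cong u u' -> cong v v' -> cong (u ++ v) (u' ++ v').
Proof. intros H1 H2. eapply cong_trans. apply cg_r; eauto. apply cg_l; auto. Qed.


Definition nfT := (T D * list (X D * T D))%type.
Definition nfw (n : nfT) : word D := inl (fst n) :: nf_word D (snd n).
Definition plusN (n : nfT) := plusw (nfw n).
Definition valid (n : nfT) := is_nf_tail D (snd n).
Definition EM := excluded_middle_informative.

Definition lactB e (n : nfT) : nfT :=
  if EM (mX e (plusN n) = plusN n) then n else (o1, (mX e (plusN n), fst n) :: snd n).
Definition lactX e (n : nfT) : nfT :=
  match n with
  | (t0, (e1,t1)::r) => if EM (t0 = o1) then (o1, (mX e e1, t1)::r) else lactB e n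
  | _ => lactB e n end.
Definition lact (x : letter D) (n : nfT) : nfT :=
  match x with inl s => (mT s (fst n), snd n) | inr e => lactX e n end.
Definition actw (w : word D) (n : nfT) := fold_right lact n w.
Definition nf (w : word D) := actw w (o1, []).

Definition isA (n : nfT) := fst n = o1 /\ snd n <> [].

Lemma lactX_A e e1 t1 r : lactX e (o1, (e1,t1)::r) = (o1, (mX e e1, t1)::r).
Proof. simpl. destruct (EM (o1 = o1)); congruence. Qed.

Lemma lactX_B e n : ~ isA n -> lactX e n = lactB e n.
Proof. destruct n as [t0 [|[e1 t1] r]]; simpl; auto.
  intros H. destruct (EM (t0 = o1)); auto. exfalso; apply H; split; simpl; auto; discriminate. Qed.

Lemma lactX_cases e n :
  (exists e1 t1 r, n = (o1, (e1,t1)::r) /\ lactX e n = (o1, (mX e e1, t1)::r)) \/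
  (~ isA n /\ mX e (plusN n) = plusN n /\ lactX e n = n) \/
  (~ isA n /\ mX e (plusN n) <> plusN n /\
     lactX e n = (o1, (mX e (plusN n), fst n) :: snd n)).
Proof.
  destruct (classic (isA n)) as [HA|HA].
  - left. destruct n as [t0 [|[e1 t1] r]]; destruct HA as [H1 H2]; simpl in *.
    + congruence.
    + subst. exists e1, t1, r. split; auto. apply lactX_A.
  - right. rewrite (lactX_B e n HA). unfold lactB. destruct (EM _); [left|right]; auto.
Qed.

Lemma plusN_eq t0 l : plusN (t0, l) = ac t0 (act_word (nf_word D l) x1).
Proof. reflexivity. Qed.

Definition hdX (l : list (X D * T D)) := match l with [] => x1 | (e,_)::_ => e end.

Lemma plusN_valid n : valid n -> plusN n = ac (fst n) (hdX (snd n)).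
Proof. destruct n as [t0 [|[e1 t1] r]]; simpl; intros Hv; rewrite plusN_eq; simpl; auto.
  destruct Hv as [_ [_ [[Hle _] _]]]. unfold plusw in Hle; simpl in Hle. rewrite Hle; auto. Qed.

Lemma valid_lact x n : valid n -> valid (lact x n).
Proof. intros Hv. destruct x as [s|e]; simpl.
  - exact Hv.
  - destruct (lactX_cases e n) as [[e1 [t1 [r [Hn Hf]]]] | [[HB [Hp Hf]] | [HB [Hp Hf]]]];
      rewrite Hf; auto.
    + subst n. unfold valid in *; simpl in *. destruct Hv as [He1 [Ht [[Hle Hne] Hr]]].
      repeat split; auto.
      * intros E. apply He1. apply le_1_eq. rewrite <- E. apply le_meet_r.
      * eapply le_trans. apply le_meet_r. exact Hle.
      * intros E. apply Hne. apply le_antisym; auto. rewrite <- E. apply le_meet_r.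
    + destruct n as [t0 l]. unfold valid in *; simpl in *. repeat split; auto.
      * intros E. apply Hp. assert (plusN (t0,l) = x1) as E2.
        { apply le_1_eq. rewrite <- E. apply le_meet_r. }
        rewrite E, E2; reflexivity.
      * intros Hl E. apply HB. split; auto.
      * apply le_meet_r.
Qed.

Lemma valid_actw w n : valid n -> valid (actw w n).
Proof. induction w; simpl; auto. intros; apply valid_lact; auto. Qed.

Lemma plusN_lact x n : plusN (lact x n) = act_word [x] (plusN n).
Proof. destruct x as [s|e]; simpl.
  - destruct n as [t0 l]; simpl. rewrite !plusN_eq. apply Hactmul.
  - destruct (lactX_cases e n) as [[e1 [t1 [r [Hn Hf]]]] | [[HB [Hp Hf]] | [HB [Hp Hf]]]];
      rewrite Hf; auto.
    + subst n. rewrite !plusN_eq. simpl. rewrite !Hact1, HXassoc; auto.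
    + destruct n as [t0 l]. simpl. rewrite (plusN_eq o1). simpl. rewrite Hact1.
      rewrite HXassoc. f_equal. rewrite <- plusN_eq. auto.
Qed.

Lemma plusN_actw w n : plusN (actw w n) = act_word w (plusN n).
Proof. induction w as [|x w IH]; simpl; auto. rewrite plusN_lact, IH; auto. Qed.

Lemma lact_absorb e m : valid m -> leX D (plusN m) e -> lact (inr e) m = m.
Proof. intros Hv Hle. simpl.
  destruct (lactX_cases e m) as [[e1 [t1 [r [Hn Hf]]]] | [[HB [Hp Hf]] | [HB [Hp Hf]]]];
      rewrite Hf; auto.
  - subst m. rewrite plusN_valid in Hle; auto. simpl in Hle. rewrite Hact1 in Hle.
    rewrite (le_meet_eq _ _ Hle); auto.
  - exfalso. apply Hp. apply le_meet_eq; auto.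
Qed.

Lemma lact_XX e f n : lact (inr e) (lact (inr f) n) = lact (inr (mX e f)) n.
Proof. simpl.
  destruct (lactX_cases f n) as [[e1 [t1 [r [Hn Hf]]]] | [[HB [Hp Hf]] | [HB [Hp Hf]]]];
      rewrite Hf.
  - subst n. rewrite !lactX_A, HXassoc; auto.
  - rewrite !(lactX_B _ _ HB). unfold lactB. rewrite HXassoc, Hp. auto.
  - rewrite lactX_A. rewrite (lactX_B _ _ HB). unfold lactB.
    destruct (EM _) as [E|E].
    + exfalso. apply Hp. apply le_antisym. apply le_meet_r.
      rewrite HXassoc in E. rewrite <- E at 1. apply le_meet_r.
    + rewrite HXassoc; auto.
Qed.

Lemma lact_X1 n : lact (inr x1) n = n.
Proof. simpl.
  destruct (lactX_cases x1 n) as [[e1 [t1 [r [Hn Hf]]]] | [[HB [Hp Hf]] | [HB [Hp Hf]]]];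
      rewrite Hf; auto.
  - subst; rewrite HX1; auto.
  - exfalso; apply Hp; apply HX1.
Qed.

Lemma actw_app u v n : actw (u ++ v) n = actw u (actw v n).
Proof. unfold actw. apply fold_right_app. Qed.

Lemma actw_cong u v : cong u v -> forall n, valid n -> actw u n = actw v n.
Proof. induction 1; intros n Hv; simpl.
  - destruct n; simpl. rewrite HTassoc; auto.
  - apply lact_XX.
  - apply (lact_absorb _ _ (valid_actw a n Hv)). rewrite plusN_actw. apply act_word_mono, le_1.
  - change (lactX x1 n) with (lact (inr x1) n). rewrite lact_X1. destruct n; simpl; rewrite HT1l; auto.
  - auto.
  - symmetry; auto.
  - rewrite IHcong1; auto.
  - rewrite !actw_app. rewrite IHcong; auto. apply valid_actw; auto.
Qed.

Lemma cong_lact x n : cong (x :: nfw n) (nfw (lact x n)).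
Proof. destruct x as [s|e].
  - destruct n as [t0 l]; simpl. unfold nfw; simpl. apply cg_TT.
  - simpl.
    destruct (lactX_cases e n) as [[e1 [t1 [r [Hn Hf]]]] | [[HB [Hp Hf]] | [HB [Hp Hf]]]];
      rewrite Hf.
    + subst n. unfold nfw; simpl.
      eapply cong_trans. apply cg_cons. apply cg_T1.
      eapply cong_trans. apply cg_XX. apply cong_sym. apply cg_T1.
    + apply cg_absorb. unfold leX. rewrite HXcomm. exact Hp.
    + unfold nfw at 2; simpl. eapply cong_trans; [|apply cong_sym; apply cg_T1].
      eapply cong_trans; [|apply cg_XX].
      apply cg_cons. apply cong_sym. apply (cong_plus (nfw n)).
Qed.

Lemma cong_nf w : cong w (nfw (nf w)).
Proof. induction w as [|x w IH].
  - apply cong_sym. apply (cg_T1 []).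
  - eapply cong_trans. apply cg_cons; exact IH. apply cong_lact.
Qed.

Lemma valid_nf w : valid (nf w).
Proof. apply valid_actw. exact I. Qed.

Lemma nf_cong u v : cong u v -> nf u = nf v.
Proof. intros H. apply actw_cong; auto. exact I. Qed.

Lemma cong_of_nf u v : nf u = nf v -> cong u v.
Proof. intros H. eapply cong_trans. apply cong_nf. rewrite H. apply cong_sym, cong_nf. Qed.

Lemma actw_tail l : is_nf_tail D l -> actw (nf_word D l) (o1, []) = (o1, l).
Proof. induction l as [|[e t] r IH]; simpl; auto.
  intros [He [Ht [[Hle Hne] Hr]]]. rewrite IH; auto. simpl. rewrite HT1r.
  destruct (lactX_cases e (t, r)) as [[e1 [t1 [r' [Hn Hf]]]] | [[HB [Hp Hf]] | [HB [Hp Hf]]]].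
  - inversion Hn; subst. exfalso. apply Ht; auto; discriminate.
  - exfalso. apply Hne. unfold leX in Hle. rewrite <- Hle. exact Hp.
  - change (lactX e (t, r) = (o1, (e, t) :: r)). rewrite Hf. simpl.
    unfold leX, plusN, plusw, nfw in *; simpl in *. rewrite Hle. reflexivity.
Qed.

Lemma nf_nfw n : valid n -> nf (nfw n) = n.
Proof. destruct n as [t0 l]. intros Hv. unfold nf, nfw; simpl.
  rewrite actw_tail; auto. simpl. rewrite HT1r; auto. Qed.


Fixpoint starv_l (l : list (X D * T D)) : X D :=
  match l with
  | [] => x1
  | (e,t) :: r => match r with [] => if EM (t = o1) then e else x1 | _ => starv_l r end
  end.

Lemma starv_l_app l e t : starv_l (l ++ [(e,t)]) = if EM (t = o1) then e else x1.
Proof. induction l as [|[a b] l IH]; simpl; auto.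
  destruct l as [|q l]; simpl in *; auto. Qed.

Lemma starv_det' l e :
  ((exists l' e', l = l' ++ [(e', o1)] /\ e = e') \/
   ((forall l' e', l <> l' ++ [(e', o1)]) /\ e = x1)) -> e = starv_l l.
Proof. intros [[l' [e' [-> ->]]] | [H ->]].
  - rewrite starv_l_app. destruct (EM _); congruence.
  - destruct l as [|q l]; auto.
    assert (Hne : q :: l <> []) by discriminate.
    destruct (exists_last Hne) as [l' [[e' t] E]].
    rewrite E, starv_l_app. destruct (EM (t = o1)); auto. subst. exfalso. eapply H; eauto.
Qed.

Lemma starv_ex l :
  ((exists l' e', l = l' ++ [(e', o1)] /\ starv_l l = e') \/
   ((forall l' e', l <> l' ++ [(e', o1)]) /\ starv_l l = x1)).
Proof. destruct (classic (exists l' e', l = l' ++ [(e', o1)])) as [[l' [e' E]]|Hn].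
  - left. exists l', e'. split; auto. subst. rewrite starv_l_app. destruct (EM _); congruence.
  - right. split. { intros l' e' E. apply Hn; eauto. }
    destruct l as [|q l]; auto.
    assert (Hne : q :: l <> []) by discriminate.
    destruct (exists_last Hne) as [l' [[e' t] E]].
    rewrite E, starv_l_app. destruct (EM (t = o1)); auto. subst. exfalso; apply Hn; eauto.
Qed.

Lemma cls_eq (u v : word D) : cong u v -> cls u = cls v.
Proof. intros H. unfold cls. extensionality w. apply propositional_extensionality.
  split; intros H'; eauto using cong_trans, cong_sym. Qed.

Lemma cls_inj (u v : word D) : cls u = cls v -> cong u v.
Proof. intros H. assert (cls u u) as H1 by apply cong_refl. rewrite H in H1.
  apply cong_sym; exact H1. Qed.

Lemma mul_cls (u v : word D) : mulP (cls u) (cls v) = cls (u ++ v).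
Proof. unfold mulP, cls. extensionality w. apply propositional_extensionality. split.
  - intros [u' [v' [H1 [H2 H3]]]]. eapply cong_trans; [apply cg_app; eauto | apply cong_sym; exact H3].
  - intros H. exists u, v. repeat split; auto using cong_refl, cong_sym. Qed.

Lemma plus_cls (u : word D) : plusP (cls u) = cls [inr (plusw u)].
Proof. unfold plusP, cls. extensionality w. apply propositional_extensionality. split.
  - intros [u' [H1 H2]]. rewrite (plusw_cong _ _ H1). apply cong_sym; auto.
  - intros H. exists u. split; auto using cong_refl, cong_sym. Qed.

Lemma star_cls (w : word D) : starP (cls w) = injX (starv_l (snd (nf w))).
Proof. unfold starP. f_equal.
  assert (Hspec : star_spec (cls w) (starv_l (snd (nf w)))).
  { exists (fst (nf w)), (snd (nf w)). split; [apply valid_nf|]. split.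
    - apply cls_eq. apply cong_nf.
    - apply starv_ex. }
  assert (Hu : forall e, star_spec (cls w) e -> e = starv_l (snd (nf w))).
  { intros e [t0 [l [Hv [Hc Hd]]]]. apply cls_inj in Hc. apply nf_cong in Hc.
    change (inl t0 :: nf_word D l) with (nfw (t0, l)) in Hc. rewrite nf_nfw in Hc; auto.
    rewrite Hc. apply starv_det'; auto. }
  apply Hu. apply epsilon_spec. eauto.
Qed.

Lemma nf_X e : nf [inr e] = if EM (e = x1) then (o1, []) else (o1, [(e, o1)]).
Proof. change (nf [inr e]) with (lactX e (o1, [])).
  destruct (lactX_cases e (o1, [])) as [[e1 [t1 [r [Hn Hf]]]] | [[HB [Hp Hf]] | [HB [Hp Hf]]]].
  - discriminate.
  - rewrite Hf. rewrite plusN_eq in Hp; simpl in Hp. rewrite Hact1, mX1r in Hp.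
    destruct (EM _); congruence.
  - rewrite Hf. rewrite plusN_eq in *; simpl in *. rewrite Hact1, mX1r in *.
    destruct (EM _); congruence.
Qed.

Lemma nf_blk t e : nf [inl t; inr e] = if EM (e = x1) then (t, []) else (t, [(e, o1)]).
Proof. change (nf [inl t; inr e]) with (lact (inl t) (nf [inr e])). rewrite nf_X.
  destruct (EM _); simpl; rewrite HT1r; auto. Qed.

Lemma injX_inj (e f : X D) : injX e = injX f -> e = f.
Proof. intros H. apply cls_inj, nf_cong in H. rewrite !nf_X in H.
  destruct (EM (e = x1)), (EM (f = x1)); congruence. Qed.

Lemma star_injX (e : X D) : starP (injX e) = injX e.
Proof. unfold injX at 1. rewrite star_cls, nf_X. destruct (EM _) as [->|]; simpl; auto.
  destruct (EM (o1 = o1)); congruence. Qed.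

Lemma star_blk (t : T D) (e : X D) : starP (cls [inl t; inr e]) = injX e.
Proof. rewrite star_cls, nf_blk. destruct (EM _) as [->|]; simpl; auto.
  destruct (EM (o1 = o1)); congruence. Qed.

Lemma injX_mul (e f : X D) : mulP (injX e) (injX f) = injX (mX e f).
Proof. unfold injX. rewrite mul_cls. apply cls_eq. apply (cg_XX e f []). Qed.

Lemma plus_injX (e : X D) : plusP (injX e) = injX e.
Proof. unfold injX. rewrite plus_cls. unfold plusw; simpl. rewrite mX1r; auto. Qed.

Lemma plus_blk (t : T D) (e : X D) : plusP (cls [inl t; inr e]) = injX (ac t e).
Proof. rewrite plus_cls. unfold plusw; simpl. rewrite mX1r; auto. Qed.

Lemma nf_word_app l e t : nf_word D (l ++ [(e,t)]) = nf_word D l ++ [inr e; inl t].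
Proof. induction l as [|[a b] l IH]; simpl; auto. rewrite IH; auto. Qed.

Lemma star_right (n : nfT) : cong (nfw n ++ [inr (starv_l (snd n))]) (nfw n).
Proof. destruct n as [t0 l]. unfold nfw; simpl.
  destruct (starv_ex l) as [[l' [e' [E H]]] | [_ H]]; rewrite H.
  - subst l. rewrite nf_word_app. change (inl t0 :: nf_word D l' ++ [inr e'; inl o1])
      with ((inl t0 :: nf_word D l') ++ [inr e'; inl o1]).
    rewrite <- app_assoc. apply (cg_l (inl t0 :: nf_word D l')). simpl.
    eapply cong_trans. apply cg_cons. apply cg_T1.
    eapply cong_trans. apply cg_XX. rewrite HXidem. apply cg_cons. apply cong_sym. apply (cg_T1 []).
  - change (inl t0 :: nf_word D l ++ [inr x1]) with ((inl t0 :: nf_word D l) ++ [inr x1]).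
    rewrite <- (app_nil_r (inl t0 :: nf_word D l)) at 2. apply (cg_l (inl t0 :: nf_word D l)). apply (cg_X1 []).
Qed.

Lemma starv_lact x n : leX D (starv_l (snd (lact x n))) (starv_l (snd n)).
Proof. destruct x as [s|e]; simpl. apply le_refl.
  destruct (lactX_cases e n) as [[e1 [t1 [r [Hn Hf]]]] | [[HB [Hp Hf]] | [HB [Hp Hf]]]];
    rewrite Hf.
  - subst n; simpl. destruct r as [|q r].
    + destruct (EM _). apply le_meet_r. apply le_refl.
    + apply le_refl.
  - apply le_refl.
  - destruct n as [t0 l]; simpl. destruct l as [|q l]. apply le_1. apply le_refl.
Qed.

Lemma starv_actw w n : leX D (starv_l (snd (actw w n))) (starv_l (snd n)).
Proof. induction w as [|x w IH]; simpl. apply le_refl.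
  eapply le_trans. apply starv_lact. exact IH. Qed.

Lemma nf_app (u v : word D) : nf (u ++ v) = actw u (nf v).
Proof. unfold nf. apply actw_app. Qed.

Lemma ehresmann : star_left_ehresmann_axioms (@isClass D) (@mulP D) (@plusP D) (@starP D).
Proof. intros x y [u ->] [v ->].
  repeat split.
  - rewrite plus_cls, mul_cls. apply cls_eq. apply (cong_plus u).
  - rewrite !plus_cls, mul_cls, plus_cls. apply cls_eq. unfold plusw; simpl.
    rewrite mX1r. apply cong_sym. apply (cg_XX _ _ []).
  - rewrite !plus_cls, !mul_cls. apply cls_eq. simpl.
    eapply cong_trans. apply (cg_XX _ _ []). rewrite HXcomm. apply cong_sym. apply (cg_XX _ _ []).
  - rewrite !plus_cls, !mul_cls, !plus_cls. f_equal. f_equal. f_equal.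
    unfold plusw. rewrite !act_word_app. simpl. rewrite mX1r. auto.
  - rewrite star_cls. unfold injX. rewrite mul_cls. apply cls_eq.
    eapply cong_trans. apply cg_r. apply cong_nf.
    eapply cong_trans. apply star_right. apply cong_sym, cong_nf.
  - rewrite star_cls, star_injX; auto.
  - rewrite !star_cls, !injX_mul, HXcomm; auto.
  - rewrite (star_cls v). set (g := starv_l (snd (nf v))).
    assert (E : mulP (cls u) (injX g) = cls (u ++ [inr g])) by (unfold injX; apply mul_cls).
    rewrite E, star_cls, injX_mul. f_equal.
    rewrite nf_app, HXcomm. apply le_meet_eq.
    eapply le_trans. apply starv_actw. rewrite nf_X. destruct (EM _); simpl.
    + rewrite e; apply le_refl.
    + destruct (EM (o1 = o1)); [apply le_refl|congruence].
  - rewrite star_cls, plus_injX; auto.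
  - rewrite plus_cls. fold (injX (plusw u)). apply star_injX.
Qed.


Variable Y : X D -> Prop.
Variable oneY : X D.
Hypothesis HYmeet : forall e f, Y e -> Y f -> Y (meet D e f).
Hypothesis HYone : Y oneY.
Hypothesis HYoneid : forall e, Y e -> meet D oneY e = e.
Hypothesis HA : forall t e f, Y e -> Y f -> leX D e f -> Y (act D t f) -> Y (act D t e).
Hypothesis HB : forall t, exists g, Y g /\ Y (act D t g).

Definition Yb (p : T D * X D) := Y (snd p) /\ Y (ac (fst p) (snd p)).
Definition blk (p : T D * X D) : word D := [inl (fst p); inr (snd p)].
Definition bw (ps : list (T D * X D)) : word D := flat_map blk ps.
Definition hblk (p : T D * X D) : Pl D := cls (blk p).

Lemma hblk_eq t e : mulP (injT t) (injX e) = hblk (t, e).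
Proof. unfold injT, injX, hblk. rewrite mul_cls. reflexivity. Qed.

Lemma HQ_iff a : HQ Y a <-> exists p, Yb p /\ a = hblk p.
Proof. split.
  - intros [t [e [H1 [H2 ->]]]]. exists (t,e). split. split; auto. apply hblk_eq.
  - intros [[t e] [[H1 H2] ->]]. exists t, e. repeat split; auto. symmetry; apply hblk_eq.
Qed.

Lemma bw_app ps qs : bw (ps ++ qs) = bw ps ++ bw qs.
Proof. unfold bw. apply flat_map_app. Qed.

Lemma Qrep a : Ql Y a -> exists ps, ps <> [] /\ Forall Yb ps /\ a = cls (bw ps).
Proof. induction 1 as [a H|a b _ [ps1 [N1 [F1 ->]]] _ [ps2 [N2 [F2 ->]]]].
  - apply HQ_iff in H. destruct H as [p [Hp ->]]. exists [p]. repeat split; auto. discriminate.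
  - exists (ps1 ++ ps2). repeat split.
    + destruct ps1; [congruence|discriminate].
    + apply Forall_app; auto.
    + rewrite mul_cls, bw_app; auto.
Qed.

Lemma Ql_hblk p : Yb p -> Ql Y (hblk p).
Proof. intros H. apply Ql_gen. apply HQ_iff. eauto. Qed.

Lemma Ql_bw ps : ps <> [] -> Forall Yb ps -> Ql Y (cls (bw ps)).
Proof. induction ps as [|p r IH]; intros N F; [congruence|]. inversion F; subst.
  destruct r as [|q r].
  - unfold bw; simpl; rewrite ?app_nil_r. apply Ql_hblk; auto.
  - change (bw (p :: q :: r)) with (blk p ++ bw (q :: r)). rewrite <- mul_cls.
    apply Ql_mul. apply Ql_hblk; auto. apply IH; auto. discriminate.
Qed.

Lemma Y_plus ps : ps <> [] -> Forall Yb ps -> Y (plusw (bw ps)).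
Proof. induction ps as [|[t e] r IH]; intros N F; [congruence|]. inversion F as [|? ? [H1 H2] F']; subst.
  change (bw ((t,e) :: r)) with ([inl t; inr e] ++ bw r). unfold plusw.
  rewrite act_word_app. simpl. destruct r as [|q r].
  - simpl. rewrite mX1r. auto.
  - assert (Y (plusw (bw (q :: r)))) as HP by (apply IH; auto; discriminate).
    unfold plusw in HP. apply (HA t _ e); auto. apply le_meet_l.
Qed.

Lemma right_oneY ps : ps <> [] -> Forall Yb ps -> cong (bw ps ++ [inr oneY]) (bw ps).
Proof. intros N F. destruct (exists_last N) as [ps0 [[t e] ->]].
  apply Forall_app in F. destruct F as [_ F]. inversion F as [|? ? [H1 H2] _]; subst.
  rewrite bw_app. change (bw [(t,e)]) with [inl t; inr e]. rewrite <- app_assoc. apply cg_l. simpl.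
  apply cg_cons. eapply cong_trans. apply (cg_XX _ _ []). rewrite HXcomm, HYoneid; auto. apply cong_refl.
Qed.

Lemma Ql_injX y : Y y -> Ql Y (injX y).
Proof. intros H. replace (injX y) with (hblk (o1, y)).
  - apply Ql_hblk. split; simpl; auto. rewrite Hact1; auto.
  - unfold hblk, injX. apply cls_eq. apply cg_T1. Qed.

Lemma Eproj_char x : Eproj (Ql Y) (@plusP D) x <-> exists y, Y y /\ x = injX y.
Proof. split.
  - intros [a [Ha ->]]. destruct (Qrep _ Ha) as [ps [N [F ->]]]. rewrite plus_cls.
    exists (plusw (bw ps)). split; auto. apply Y_plus; auto.
  - intros [y [Hy ->]]. exists (injX y). split. apply Ql_injX; auto. rewrite plus_injX; auto.
Qed.

Fixpoint cpl (t0 : T D) (l : list (X D * T D)) : list (T D * X D) :=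
  match l with
  | [] => [(t0, x1)]
  | (e,t)::r => (t0,e) :: match r with [] => if EM (t = o1) then [] else cpl t r | _ => cpl t r end
  end.
Definition cp (n : nfT) := cpl (fst n) (snd n).

Lemma cpl_cons t0 l : cpl t0 l = (t0, hdX l) :: tl (cpl o1 l).
Proof. destruct l as [|[e t] r]; reflexivity. Qed.

Lemma cpl_cons2 t0 e t l : t <> o1 -> cpl t0 ((e,t)::l) = (t0,e) :: cpl t l.
Proof. intros H. destruct l; simpl; auto. destruct (EM (t = o1)); congruence. Qed.

Lemma G_step p n : Yb p -> valid n -> Forall Yb (cp n) -> Forall Yb (cp (actw (blk p) n)).
Proof. destruct p as [s g]. intros [Hg Hsg] Hv F.
  assert (Hhd : Yb (fst n, hdX (snd n))).
  { unfold cp in F. rewrite cpl_cons in F. inversion F; auto. }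
  destruct Hhd as [Hh1 Hh2]; simpl in Hh1, Hh2.
  assert (HP : plusN n = ac (fst n) (hdX (snd n))) by (apply plusN_valid; auto).
  change (actw (blk (s,g)) n) with (lact (inl s) (lactX g n)).
  destruct (lactX_cases g n) as [[e1 [t1 [r [Hn Hf]]]] | [[HBn [Hp Hf]] | [HBn [Hp Hf]]]];
    rewrite Hf.
  - subst n. unfold cp in *; simpl in *. rewrite HT1r.
    inversion F; subst. constructor; auto. split; simpl.
    + apply HYmeet; auto.
    + apply (HA s _ g); auto. apply le_meet_l.
  - unfold cp in *; simpl. rewrite cpl_cons. rewrite cpl_cons in F. inversion F; subst.
    constructor; auto. split; simpl; auto. rewrite Hactmul. rewrite <- HP.
    apply (HA s _ g); auto. rewrite HP; auto. unfold leX; rewrite HXcomm; auto.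
  - unfold cp in *; simpl. rewrite HT1r. constructor.
    + split; simpl. apply HYmeet; auto. rewrite HP; auto.
      apply (HA s _ g); auto. apply HYmeet; auto. rewrite HP; auto. apply le_meet_l.
    + destruct n as [t0 l]; simpl in *. destruct l as [|q l].
      * destruct (EM (t0 = o1)); auto.
      * auto.
Qed.

Lemma G_bw ps : ps <> [] -> Forall Yb ps -> Forall Yb (cp (nf (bw ps))).
Proof. induction ps as [|p r IH]; intros N F; [congruence|]. inversion F; subst.
  destruct r as [|q r].
  - destruct p as [t e]. change (bw [(t,e)]) with [inl t; inr e]. rewrite nf_blk. destruct (EM (e = x1)) as [->|].
    + simpl. constructor; auto.
    + unfold cp; simpl. destruct (EM (o1 = o1)); [|congruence]. constructor; auto.
  - change (bw (p :: q :: r)) with (blk p ++ bw (q :: r)). rewrite nf_app.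
    apply G_step; auto. apply valid_nf. apply IH; auto. discriminate.
Qed.

Lemma Y_starv n : valid n -> Forall Yb (cp n) -> Y (starv_l (snd n)).
Proof. destruct n as [t0 l]. unfold valid, cp; simpl. revert t0.
  induction l as [|[e t] r IH]; intros t0 Hv F; simpl in *.
  - inversion F as [|? ? [H1 H2] _]; auto.
  - destruct Hv as [_ [_ [_ Hr]]]. inversion F as [|? ? [H1 H2] F']; subst; simpl in *.
    destruct r as [|q r].
    + destruct (EM (t = o1)); auto. inversion F' as [|? ? [H3 H4] _]; auto.
    + apply (IH t); auto.
Qed.

Fixpoint chainX (ps : list (T D * X D)) : Prop :=
  match ps with
  | [] => True
  | (t,e)::r => match r with [] => True | (t',e')::_ => ltX D e (ac t' e') /\ t' <> o1 end
                /\ chainX r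
  end.

Lemma chain_cp n : valid n -> chainX (cp n).
Proof. destruct n as [t0 l]. unfold valid, cp; simpl. revert t0.
  induction l as [|[e t] r IH]; intros t0 Hv; simpl; auto.
  destruct Hv as [He [Ht [Hlt Hr]]].
  assert (HP : plusw (inl t :: nf_word D r) = ac t (hdX r)).
  { apply (plusN_valid (t, r)); auto. }
  rewrite HP in Hlt.
  destruct r as [|q r].
  - destruct (EM (t = o1)); simpl; auto.
  - specialize (IH t Hr). destruct q as [e1 t1]. simpl in *. split; [split; auto; apply Ht; discriminate | exact IH].
Qed.

Lemma cp_cong n : cong (bw (cp n)) (nfw n).
Proof. destruct n as [t0 l]. unfold cp, nfw; simpl. revert t0.
  induction l as [|[e t] r IH]; intros t0; simpl.
  - apply cg_cons. apply (cg_X1 []).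
  - apply cg_cons, cg_cons. destruct r as [|q r].
    + destruct (EM (t = o1)) as [->|]; simpl.
      * apply cong_sym. apply (cg_T1 []).
      * apply (IH t).
    + apply (IH t).
Qed.

Lemma prodl_map (one : Pl D) ps : ps <> [] -> prodl (@mulP D) one (map hblk ps) = cls (bw ps).
Proof. induction ps as [|p r IH]; intros N; [congruence|].
  destruct r as [|q r].
  - unfold bw; simpl; rewrite ?app_nil_r. reflexivity.
  - change (prodl (@mulP D) one (map hblk (p :: q :: r)))
      with (mulP (hblk p) (prodl (@mulP D) one (map hblk (q :: r)))).
    rewrite IH by discriminate. unfold hblk. rewrite mul_cls. reflexivity.
Qed.

Lemma lt_injX a b : lt (@mulP D) (injX a) (injX b) <-> ltX D a b.
Proof. unfold lt, le, ltX, leX. rewrite injX_mul. split.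
  - intros [H1 H2]. split. apply injX_inj; auto. intros E; apply H2; subst; auto.
  - intros [H1 H2]. split. rewrite H1; auto. intros E; apply H2. apply injX_inj; auto.
Qed.

Lemma notE_hblk p : fst p <> o1 -> ~ Eproj (Ql Y) (@plusP D) (hblk p).
Proof. destruct p as [t e]. intros H HE. apply Eproj_char in HE. destruct HE as [y [_ E]].
  unfold hblk, injX in E. apply cls_inj, nf_cong in E.
  change (nf (blk (t,e))) with (nf [inl t; inr e]) in E.
  rewrite nf_blk, nf_X in E. simpl in H. destruct (EM _), (EM _); inversion E; auto.
Qed.

Lemma E_hblk e : Y e -> Eproj (Ql Y) (@plusP D) (hblk (o1, e)).
Proof. intros H. apply Eproj_char. exists e. split; auto.
  unfold hblk, injX. apply cls_eq. apply cg_T1. Qed.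

Lemma chain_canon ps : Forall Yb ps ->
  (chainX ps <-> canon_chain (Ql Y) (@mulP D) (@plusP D) (@starP D) (map hblk ps)).
Proof. induction ps as [|[t e] r IH]; intros F; simpl; [tauto|].
  inversion F; subst. specialize (IH H2).
  destruct r as [|[t' e'] r]; simpl; [tauto|].
  simpl in IH. rewrite <- IH.
  change (hblk (t,e)) with (cls [inl t; inr e]). change (hblk (t',e')) with (cls [inl t'; inr e']).
  rewrite star_blk, plus_blk.
  rewrite lt_injX. split.
  - intros [[H3 H4] H5]. split; [exact H3 | split; [exact (notE_hblk (t',e') H4) | exact H5]].
  - intros [H3 [H4 H5]]. split; [split; [exact H3|] | exact H5]. intros E; subst. apply H4.
    inversion H2 as [|? ? [Y1 Y2] _]; subst. apply E_hblk; auto.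
Qed.

Lemma cp_nf_chain ps : ps <> [] -> chainX ps -> cp (nf (bw ps)) = ps.
Proof. induction ps as [|[t e] r IH]; intros N C; [congruence|].
  destruct r as [|[t' e'] r].
  - change (bw [(t,e)]) with [inl t; inr e]. rewrite nf_blk. destruct (EM (e = x1)) as [->|]; simpl; auto.
    unfold cp; simpl. destruct (EM (o1 = o1)); congruence.
  - destruct C as [[Hlt Ht'] C].
    assert (IH' : cp (nf (bw ((t', e') :: r))) = (t', e') :: r) by (apply IH; auto; discriminate).
    change (bw ((t, e) :: (t', e') :: r)) with (blk (t,e) ++ bw ((t', e') :: r)).
    rewrite nf_app.
    assert (Hv : valid (nf (bw ((t', e') :: r)))) by apply valid_nf.
    revert IH' Hv. generalize (nf (bw ((t', e') :: r))). intros n' IH' Hv.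
    change (actw (blk (t, e)) n') with (lact (inl t) (lactX e n')).
    unfold cp in IH'. rewrite cpl_cons in IH'. injection IH' as H1 H2 H3.
    assert (HP : plusN n' = ac t' e') by (rewrite plusN_valid; auto; rewrite H1, H2; auto).
    destruct (lactX_cases e n') as [[e1 [t1 [r1 [Hn Hf]]]] | [[HBn [Hp Hf]] | [HBn [Hp Hf]]]].
    + exfalso. rewrite Hn in H1. simpl in H1. congruence.
    + exfalso. destruct Hlt as [Hle Hne]. apply Hne. rewrite <- HP in *.
      rewrite <- Hp. unfold leX in Hle. rewrite Hle. auto.
    + rewrite Hf. simpl. rewrite HT1r. rewrite HP.
      destruct Hlt as [Hle Hne]. unfold leX in Hle. rewrite Hle.
      destruct n' as [t0 l]; simpl in *. subst t0.
      change (cp (t, (e, t') :: l)) with (cpl t ((e,t')::l)). rewrite cpl_cons2; auto. f_equal.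
      rewrite cpl_cons. simpl. rewrite H2, H3. auto.
Qed.


Lemma hblk_mulX t e g : mulP (hblk (t, e)) (injX g) = hblk (t, mX e g).
Proof. unfold hblk, injX. rewrite mul_cls. apply cls_eq. simpl. apply cg_cons. apply (cg_XX _ _ []). Qed.

Lemma star_hblk t e : starP (hblk (t, e)) = injX e.
Proof. exact (star_blk t e). Qed.
Lemma plus_hblk t e : plusP (hblk (t, e)) = injX (ac t e).
Proof. exact (plus_blk t e). Qed.

Lemma Eproj_injX y : Y y -> Eproj (Ql Y) (@plusP D) (injX y).
Proof. intros H. apply Eproj_char. eauto. Qed.

Lemma L_sig t e e' : Yb (t, e) -> Yb (t, e') ->
  sigma (Ql Y) (@mulP D) (@plusP D) (hblk (t, e)) (hblk (t, e')).
Proof. intros H1 H2.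
  assert (A : forall a b, Yb (t, a) -> Yb (t, b) ->
     sigma (Ql Y) (@mulP D) (@plusP D) (hblk (t, a)) (hblk (t, mX a b))).
  { intros a b [Ha1 Ha2] [Hb1 Hb2]. simpl in *.
    rewrite <- (HXidem a) at 1. rewrite <- !hblk_mulX.
    apply sigma_l. apply Ql_hblk; split; auto.
    apply sigma_base; apply Eproj_injX; auto. }
  eapply sigma_trans. apply (A e e'); auto.
  rewrite HXcomm. apply sigma_sym. apply A; auto.
Qed.

Lemma K_mul t e s f : leX D (ac s f) e -> mulP (hblk (t, e)) (hblk (s, f)) = hblk (mT t s, f).
Proof. intros H. unfold hblk. rewrite mul_cls. apply cls_eq. simpl.
  eapply cong_trans. apply cg_cons. apply (cg_absorb e [inl s; inr f]).
  unfold plusw; simpl. rewrite mX1r; exact H. apply (cg_TT _ _ [inr f]). Qed.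

Definition tprod (w : word D) : T D :=
  fold_right (fun l acc => match l with inl t => mT t acc | inr _ => acc end) o1 w.

Lemma tprod_app u v : tprod (u ++ v) = mT (tprod u) (tprod v).
Proof. induction u as [|[t|e] u IH]; simpl; auto. rewrite IH; auto. Qed.

Lemma tprod_cong u v : cong u v -> tprod u = tprod v.
Proof. induction 1; simpl; auto.
  - congruence.
  - rewrite !tprod_app, IHcong; auto.
Qed.

Lemma sigma_inv a b : sigma (Ql Y) (@mulP D) (@plusP D) a b ->
  exists u v, a = cls u /\ b = cls v /\ tprod u = tprod v.
Proof. induction 1 as [e f He Hf|a Ha|a b _ IH|a b c _ IH1 _ IH2|c a b Hc _ IH|c a b Hc _ IH].
  - apply Eproj_char in He, Hf. destruct He as [y1 [_ ->]]. destruct Hf as [y2 [_ ->]].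
    exists [inr y1], [inr y2]. auto.
  - destruct (Qrep _ Ha) as [ps [_ [_ ->]]]. exists (bw ps), (bw ps). auto.
  - destruct IH as [u [v [? [? ?]]]]. exists v, u. auto.
  - destruct IH1 as [u [v [-> [-> E1]]]]. destruct IH2 as [v' [w [E2 [-> E3]]]].
    exists u, w. repeat split; auto. apply cls_inj, tprod_cong in E2. congruence.
  - destruct (Qrep _ Hc) as [ps [_ [_ ->]]]. destruct IH as [u [v [-> [-> E]]]].
    exists (bw ps ++ u), (bw ps ++ v). rewrite !mul_cls, !tprod_app, E. auto.
  - destruct (Qrep _ Hc) as [ps [_ [_ ->]]]. destruct IH as [u [v [-> [-> E]]]].
    exists (u ++ bw ps), (v ++ bw ps). rewrite !mul_cls, !tprod_app, E. auto.
Qed.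

Lemma tprod_hblk_sig t e s f : sigma (Ql Y) (@mulP D) (@plusP D) (hblk (t, e)) (hblk (s, f)) -> t = s.
Proof. intros H. apply sigma_inv in H. destruct H as [u [v [E1 [E2 E3]]]].
  unfold hblk in *. apply cls_inj, tprod_cong in E1. apply cls_inj, tprod_cong in E2.
  simpl in *. rewrite !HT1r in *. congruence. Qed.

Lemma HQ_hblk a : HQ Y a -> exists t e, Yb (t, e) /\ a = hblk (t, e).
Proof. intros H. apply HQ_iff in H. destruct H as [[t e] [? ?]]. eauto. Qed.

Lemma HQ_map ps : Forall Yb ps -> Forall (HQ Y) (map hblk ps).
Proof. induction 1; simpl; constructor; auto. apply HQ_iff; eauto. Qed.

Lemma map_HQ l : Forall (HQ Y) l -> exists ps, Forall Yb ps /\ l = map hblk ps.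
Proof. induction 1 as [|a l Ha _ [ps [F ->]]]. exists []; auto.
  apply HQ_iff in Ha. destruct Ha as [p [Hp ->]]. exists (p :: ps); auto. Qed.

Lemma main_sec :
  let Q := Ql Y in
  let mul := @mulP D in
  let plus := @plusP D in
  let star := @starP D in
  let oneQ := @injX D oneY in
  (forall a, Q a -> isClass a) /\
  closed_ops Q mul plus star /\
  is_monoid_with_id Q mul oneQ /\
  star_left_ehresmann_axioms Q mul plus star /\
  E_plus_eq_star Q plus star /\
  (forall e, Eproj Q plus e <-> exists y, Y y /\ e = @injX D y) /\
  proper_basis Q mul oneQ plus star (HQ Y).
Proof using All.
  intros Q mul plus star oneQ. subst Q mul plus star oneQ.
  assert (Hcls : forall a, Ql Y a -> isClass a).
  { intros a Ha. destruct (Qrep _ Ha) as [ps [_ [_ ->]]]. exists (bw ps); auto. }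
  assert (Hstar : forall a, Ql Y a -> exists y, Y y /\ starP a = injX y).
  { intros a Ha. destruct (Qrep _ Ha) as [ps [N [F ->]]]. rewrite star_cls.
    eexists; split; [|reflexivity]. apply Y_starv. apply valid_nf. apply G_bw; auto. }
  split; [exact Hcls|].
  split.
  { split; [|split].
    - intros; apply Ql_mul; auto.
    - intros a Ha. destruct (Qrep _ Ha) as [ps [N [F ->]]]. rewrite plus_cls.
      apply Ql_injX. apply Y_plus; auto.
    - intros a Ha. destruct (Hstar a Ha) as [y [Hy ->]]. apply Ql_injX; auto. }
  split.
  { split; [apply Ql_injX; auto|]. split.
    - intros a Ha. destruct (Qrep _ Ha) as [ps [N [F ->]]]. unfold injX. rewrite !mul_cls. split.
      + apply cls_eq. simpl. apply cg_absorb. unfold leX. rewrite HXcomm, HYoneid; auto.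
        apply Y_plus; auto.
      + apply cls_eq. apply right_oneY; auto.
    - intros a b c Ha Hb Hc.
      destruct (Hcls a Ha) as [u ->]. destruct (Hcls b Hb) as [v ->]. destruct (Hcls c Hc) as [w ->].
      rewrite !mul_cls, app_assoc; auto. }
  split.
  { intros x y Hx Hy. apply ehresmann; auto. }
  split.
  { intros e. split.
    - intros [a [Ha ->]]. destruct (Qrep _ Ha) as [ps [N [F ->]]]. rewrite plus_cls.
      exists (injX (plusw (bw ps))). split. apply Ql_injX, Y_plus; auto. rewrite star_injX; auto.
    - intros [a [Ha ->]]. destruct (Hstar a Ha) as [y [Hy ->]]. exists (injX y).
      split. apply Ql_injX; auto. rewrite plus_injX; auto. }
  split; [apply Eproj_char|].
  split; [split; [|split]|].
  -
    split; [|split; [|split; [|split; [|split]]]].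
    + intros h Hh. apply Ql_gen; auto.
    + intros e He. apply Eproj_char in He. destruct He as [y [Hy ->]]. apply HQ_iff.
      exists (o1, y). split. split; simpl; auto. rewrite Hact1; auto.
      unfold hblk, injX. apply cls_eq. apply cong_sym, cg_T1.
    + intros h e Hh He. apply HQ_hblk in Hh. destruct Hh as [t [f [[Y1 Y2] ->]]].
      apply Eproj_char in He. destruct He as [g [Hg ->]]. rewrite hblk_mulX. split.
      * apply HQ_iff. exists (t, mX f g). split; auto. split; simpl. apply HYmeet; auto.
        apply (HA t _ f); auto. apply le_meet_l.
      * rewrite !star_hblk, injX_mul. auto.
    + intros h k Hh Hk _ Hle. apply HQ_hblk in Hh. destruct Hh as [t [e [[Y1 Y2] ->]]].
      apply HQ_hblk in Hk. destruct Hk as [s [f [[Y3 Y4] ->]]]. simpl in *.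
      unfold le in Hle. rewrite plus_hblk, star_hblk, injX_mul in Hle.
      apply injX_inj in Hle. fold (leX D (ac s f) e) in Hle.
      rewrite K_mul; auto. split.
      * apply HQ_iff. exists (mT t s, f). split; auto. split; simpl; auto.
        rewrite Hactmul. apply (HA t _ e); auto.
      * rewrite !star_hblk. auto.
    + intros m Hm. induction Hm as [a Ha|a b Ha IHa Hb IHb].
      * exists a. split; auto. apply sigma_refl. apply Ql_gen; auto.
      * destruct IHa as [h1 [Hh1 S1]]. destruct IHb as [h2 [Hh2 S2]].
        apply HQ_hblk in Hh1. destruct Hh1 as [t [e [[Y1 Y2] ->]]].
        apply HQ_hblk in Hh2. destruct Hh2 as [s [f [[Y3 Y4] ->]]]. simpl in *.
        destruct (HB (mT t s)) as [g [Hg Htsg]].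
        assert (Yg' : Y (mX f g)) by (apply HYmeet; auto).
        assert (Ysg' : Y (ac s (mX f g))) by (apply (HA s _ f); auto; apply le_meet_l).
        assert (Ytsg' : Y (ac (mT t s) (mX f g))) by (apply (HA _ _ g); auto; apply le_meet_r).
        exists (hblk (mT t s, mX f g)). split.
        { apply HQ_iff. eexists; split; [|reflexivity]. split; auto. }
        eapply sigma_trans. apply sigma_r. exact Hb. exact S1.
        eapply sigma_trans. apply sigma_l. apply Ql_hblk; split; auto. exact S2.
        eapply sigma_trans. apply sigma_l. apply Ql_hblk; split; auto.
        apply (L_sig s f (mX f g)); split; auto.
        rewrite <- (K_mul t (ac s (mX f g)) s (mX f g)) by apply le_refl.
        apply sigma_r. apply Ql_hblk; split; auto.
        apply L_sig; split; simpl; auto. rewrite <- Hactmul; auto.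
    + intros h k w Hh Hk Hw Hs Hst.
      apply HQ_hblk in Hh. destruct Hh as [t [e [[Y1 Y2] ->]]].
      apply HQ_hblk in Hk. destruct Hk as [s [f [[Y3 Y4] ->]]].
      apply HQ_hblk in Hw. destruct Hw as [r [g [[Y5 Y6] ->]]]. simpl in *.
      rewrite !star_hblk in Hst. apply injX_inj in Hst. subst g.
      apply sigma_inv in Hs. destruct Hs as [u [v [E1 [E2 E3]]]].
      unfold hblk in E1, E2. rewrite mul_cls in E1.
      apply cls_inj, tprod_cong in E1. apply cls_inj, tprod_cong in E2. simpl in E1, E2.
      rewrite !HT1r in *. assert (Ers : r = mT t s) by congruence. rewrite Ers in Y6.
      exists (hblk (t, ac s f)). split; [|split].
      * apply HQ_iff. eexists; split; [|reflexivity]. split; simpl; auto.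
        rewrite <- Hactmul; auto.
      * apply L_sig; split; simpl; auto. rewrite <- Hactmul; auto.
      * unfold le. rewrite plus_hblk, star_hblk, injX_mul, HXidem. auto.
  -
    intros a Ha. destruct (Qrep _ Ha) as [ps [N [F ->]]]. exists (map hblk ps). split; [|split].
    + destruct ps; simpl; congruence.
    + apply HQ_map; auto.
    + apply prodl_map; auto.
  -
    intros a Ha. destruct (Qrep _ Ha) as [ps [N [F ->]]]. split.
    + set (n := nf (bw ps)). exists (map hblk (cp n)). split; [split; [|split]|].
      * unfold cp. rewrite cpl_cons. simpl. discriminate.
      * apply HQ_map. apply G_bw; auto.
      * apply chain_canon. apply G_bw; auto. apply chain_cp, valid_nf.
      * rewrite prodl_map. apply cls_eq. eapply cong_trans. apply cp_cong.
        apply cong_sym, cong_nf. unfold cp; rewrite cpl_cons; discriminate.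
    + intros l l' [N1 [F1 C1]] [N2 [F2 C2]] E1 E2.
      destruct (map_HQ _ F1) as [ps1 [G1 ->]]. destruct (map_HQ _ F2) as [ps2 [G2 ->]].
      apply chain_canon in C1; auto. apply chain_canon in C2; auto.
      assert (P1 : ps1 <> []) by (intros ->; apply N1; auto).
      assert (P2 : ps2 <> []) by (intros ->; apply N2; auto).
      rewrite prodl_map in E1, E2; auto. rewrite <- E2 in E1.
      apply cls_inj, nf_cong in E1.
      rewrite <- (cp_nf_chain ps1), <- (cp_nf_chain ps2), E1; auto.
  -
    intros h k Hh Hk.
    apply HQ_hblk in Hh. destruct Hh as [t [e [[Y1 Y2] ->]]].
    apply HQ_hblk in Hk. destruct Hk as [s [f [[Y3 Y4] ->]]]. split.
    + intros [Hst Hs]. rewrite !star_hblk in Hst. apply injX_inj in Hst.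
      subst f. apply tprod_hblk_sig in Hs. subst; auto.
    + intros E. rewrite E. split; auto. apply sigma_refl. apply Ql_hblk; split; auto.
Qed.

End Base.

Theorem mainTheorem18 (D : data) (Y : X D -> Prop) (oneY : X D)
  (* T is a monoid *)
  (HTassoc : forall r s t, mulT D (mulT D r s) t = mulT D r (mulT D s t))
  (HT1l : forall t, mulT D (oneT D) t = t)
  (HT1r : forall t, mulT D t (oneT D) = t)
  (* X is a semilattice with identity *)
  (HXassoc : forall e f g, meet D (meet D e f) g = meet D e (meet D f g))
  (HXcomm : forall e f, meet D e f = meet D f e)
  (HXidem : forall e, meet D e e = e)
  (HX1 : forall e, meet D (oneX D) e = e)
  (* order-preserving left action *)
  (Hact1 : forall e, act D (oneT D) e = e)
  (Hactmul : forall s t e, act D (mulT D s t) e = act D s (act D t e))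
  (Hactmono : forall t e f, @leX D e f -> @leX D (act D t e) (act D t f))
  (* Y is a subsemilattice with identity oneY *)
  (HYmeet : forall e f, Y e -> Y f -> Y (meet D e f))
  (HYone : Y oneY)
  (HYoneid : forall e, Y e -> meet D oneY e = e)
  (* (A) *)
  (HA : forall t e f, Y e -> Y f -> @leX D e f -> Y (act D t f) -> Y (act D t e))
  (* (B) *)
  (HB : forall t, exists g, Y g /\ Y (act D t g)) :
  let Q := Ql Y in
  let mul := @mulP D in
  let plus := @plusP D in
  let star := @starP D in
  let oneQ := @injX D oneY in
  (* subsemigroup of P_l(T,X) closed under + and * *)
  (forall a, Q a -> isClass a) /\
  closed_ops Q mul plus star /\
  (* monoid with identity 1_Y *)
  is_monoid_with_id Q mul oneQ /\
  (* *-left Ehresmann monoid with semilattice of projections Y *)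
  star_left_ehresmann_axioms Q mul plus star /\
  E_plus_eq_star Q plus star /\
  (forall e, Eproj Q plus e <-> exists y, Y y /\ e = @injX D y) /\
  (* H^Q is a proper basis *)
  proper_basis Q mul oneQ plus star (HQ Y).
Proof.
  exact (main_sec D HTassoc HT1l HT1r HXassoc HXcomm HXidem HX1 Hact1 Hactmul Hactmono
           Y oneY HYmeet HYone HYoneid HA HB).
Qed.
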